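(* There exists a constant $c_1>0$ such that for all sufficiently large $n$ with $t\le c_1 n$ and for all $k$ with $30\, x\log n\le k\le c_1 n$, the probability that the reverse reachable set of $B$ has exactly $k$ vertices is at most $\frac{1}{n^2}$.
   Context: Random graph model: $V$ is a set of $n$ vertices, $B\subseteq V$ a target set with $|B|=t$, each $v\in V$ has a prescribed out-degree $d_v$ with $2\le d_{\min}\le d_v\le d_{\max}$ (constants independent of $n$), and for each $v$ independently its out-neighbour set is chosen uniformly at random among all $d_v$-element subsets of $V$. $x$ is the number of distinct values among the $d_v$. The reverse reachable set of $B$ is the set of vertices having a directed path to a vertex of $B$. $\log$ is the natural logarithm. *)

(* Defs.v *)
From mathcomp Require Import all_boot.
From Stdlib Require Import Reals.
Set Implicit Arguments. Unset Strict Implicit. Unset Printing Implicit Defensive.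

Definition outcome (n : nat) := {ffun 'I_n -> {set 'I_n}}.

(* Admissible outcomes: out-neighbour set of v has exactly d v elements.
   The random model (independent uniform d_v-subsets) is the uniform
   distribution on this finite set of outcomes. *)
Definition admissible n (d : 'I_n -> nat) (f : outcome n) : bool :=
  [forall v, #|f v| == d v].

Definition edge n (f : outcome n) : rel 'I_n := fun u w => w \in f u.

Definition rev_reach n (f : outcome n) (B : {set 'I_n}) : {set 'I_n} :=
  [set u | [exists b in B, connect (edge f) u b]].

Definition prob_rr_size n (d : 'I_n -> nat) (B : {set 'I_n}) (k : nat) : R :=
  (INR #|[set f : outcome n | admissible d f && (#|rev_reach f B| == k)]|
   / INR #|[set f : outcome n | admissible d f]|)%R.

(* x = number of distinct values among the d_v *)
Definition ndistinct n (d : 'I_n -> nat) : nat :=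
  size (undup [seq d v | v <- enum 'I_n]).

(* Main.v *)
Require Import Defs.
From mathcomp Require Import all_boot.
From Stdlib Require Import Reals.
From Stdlib Require Import Lra Lia.
Set Implicit Arguments. Unset Strict Implicit. Unset Printing Implicit Defensive.
Section Analytic.
Local Open Scope R_scope.

Lemma exp_pow_nat (x : R) (m : nat) : exp x ^ m = exp (INR m * x).
Proof.
induction m as [|m IH].
- rewrite /= Rmult_0_l exp_0; reflexivity.
- change (exp x ^ S m) with (exp x * exp x ^ m). rewrite IH -exp_plus S_INR; f_equal; ring.
Qed.

Lemma exp_le_mono (x y : R) : x <= y -> exp x <= exp y.
Proof.
intro h; destruct (Rle_lt_or_eq_dec _ _ h) as [h'|h'].
- left; apply exp_increasing; exact h'.
- rewrite h'; right; reflexivity.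
Qed.

Lemma two_le_exp : 2 <= exp (9/10).
Proof.
have h := exp_ineq1_le (9/40).
have e : exp (9/10) = exp (9/40) ^ 4 by rewrite exp_pow_nat; f_equal; simpl; lra.
rewrite e.
have h2 : (1 + 9/40) ^ 4 <= exp (9/40) ^ 4 by apply pow_incr; lra.
simpl in h2 |- *; lra.
Qed.

Lemma analytic (n k t : nat) :
  1 <= INR n -> 30 * ln (INR n) <= INR k -> INR k <= INR n / 100 -> INR t <= INR n / 100 ->
  is_true (leq t n) ->
  2 ^ (subn k t) * (1 - INR k / INR n + (INR k / INR n) ^ 2 / 2) ^ (subn n t) <= 1 / INR n ^ 2.
Proof.
move=> hn hk hkn htn htle.
set nn := INR n in hn hk hkn htn *; set kk := INR k in hk hkn *; set tt := INR t in htn *.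
set y := kk / nn.
have hkk : kk = y * nn by unfold y; field; lra.
have ht0 : 0 <= tt by apply pos_INR.
have hk0 : 0 <= kk by apply pos_INR.
have hy0 : 0 <= y by unfold y; apply Rmult_le_pos; [lra | left; apply Rinv_0_lt_compat; lra].
have hy1 : y <= 1/100 by nra.
have hln : 0 <= ln nn.
  { destruct (Rle_lt_or_eq_dec _ _ hn) as [h|h].
  - rewrite -ln_1; left; apply ln_increasing; lra.
  - rewrite -h ln_1; lra. }
set a := 1 - y + y ^ 2 / 2.
have ha0 : 0 <= a by unfold a; simpl; nra.
have ha1 : a <= exp (- (995/1000) * y).
  apply Rle_trans with (1 + (- (995/1000) * y)); [unfold a; simpl; nra | apply exp_ineq1_le].
have A1 : a ^ (subn n t) <= exp (- (98/100) * kk).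
  apply Rle_trans with (exp (- (995/1000) * y) ^ (subn n t)).
    apply pow_incr; lra.
  rewrite exp_pow_nat minus_INR; last by apply/leP.
  apply exp_le_mono; fold nn tt; nra.
have A2 : 2 ^ (subn k t) <= exp (9/10 * kk).
  apply Rle_trans with (2 ^ k); first by apply Rle_pow; [lra | apply/leP; exact: leq_subr].
  apply Rle_trans with (exp (9/10) ^ k); first by apply pow_incr; split; [lra | apply two_le_exp].
  rewrite exp_pow_nat; fold kk; apply exp_le_mono; lra.
apply Rle_trans with (exp (9/10 * kk) * exp (- (98/100) * kk)).
  apply Rmult_le_compat; try lra; try apply pow_le; lra.
rewrite <- exp_plus.
have e : 1 / nn ^ 2 = exp (- (INR 2 * ln nn)).
  rewrite exp_Ropp -exp_pow_nat exp_ln; try lra.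
rewrite e; apply exp_le_mono; simpl; nra.
Qed.
End Analytic.

From mathcomp Require Import all_boot all_order all_algebra.
From mathcomp Require Import Rstruct.
From mathcomp Require Import ring zify.
Lemma bin_ratio m n d : m <= n -> 'C(m, d) * n ^ d <= m ^ d * 'C(n, d).
Proof.
move=> hmn; elim: d => [|d IH]; first by rewrite !bin0 !expn0.
rewrite -(leq_pmul2l (ltn0Sn d)) mulnA.
rewrite (mul_bin_left m d) [d.+1 * (_ * _)]mulnCA (mul_bin_left n d) !expnS.
have H2 : (m - d) * n <= m * (n - d).
  rewrite mulnBl mulnBr; apply: leq_sub2l. by rewrite mulnC leq_mul2l hmn orbT.
move: IH H2; set a := 'C(m, d); set b := n ^ d; set c := 'C(n, d); set e := m ^ d.
set md := m - d; set nd := n - d.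
move=> IH H2.
have H := leq_mul IH H2.
have E1 : md * a * (n * b) = a * b * (md * n) by nia.
have E2 : m * e * (nd * c) = e * c * (m * nd) by nia.
by rewrite E1 E2.
Qed.

Section Comb.
Variable n : nat.
Variable d : 'I_n -> nat.
Variable B : {set 'I_n}.

Definition Dset (dd : nat) := [set X : {set 'I_n} | #|X| == dd].
Definition Aset (S : {set 'I_n}) (dd : nat) := [set X : {set 'I_n} | X \subset ~: S & #|X| == dd].
Definition Fam (S : {set 'I_n}) (v : 'I_n) : {set {set 'I_n}} :=
  if v \in B then Dset (d v) else if v \in S then Dset (d v) :\: Aset S (d v) else Aset S (d v).

Lemma B_sub_rr (f : outcome n) : B \subset rev_reach f B.
Proof.
apply/subsetP=> b hb; rewrite inE; apply/existsP; exists b; by rewrite hb connect0.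
Qed.

Lemma fam_mem (f : outcome n) : admissible d f ->
  forall v, f v \in Fam (rev_reach f B) v.
Proof.
move=> /forallP hadm v; have hc := hadm v.
rewrite /Fam; case: ifP => hvB; first by rewrite inE.
have hA : (f v \subset ~: rev_reach f B) = (v \notin rev_reach f B).
  apply/idP/idP.
  - move=> hs; apply/negP; rewrite inE => /existsP [b /andP [hb /connectP [p hp hl]]].
    case: p hp hl => [|w p] /=.
      by move=> _ hbv; move: hvB; rewrite -hbv hb.
    move=> /andP [hvw hp] hl.
    have : w \in rev_reach f B.
      rewrite inE; apply/existsP; exists b; rewrite hb /=; apply/connectP; by exists p.
    by move/(subsetP hs): hvw; rewrite inE => /negbTE ->.
  - move=> hv; apply/subsetP => w hw; rewrite inE; apply/negP => hwr; apply/negP: hv.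
    rewrite negbK; move: hwr; rewrite !inE => /existsP [b /andP [hb hcb]].
    apply/existsP; exists b; rewrite hb /=.
    apply: connect_trans hcb; apply: connect1; exact: hw.
case: ifP => hv.
  by rewrite !inE hc hA hv.
by rewrite !inE hc hA hv.
Qed.
Lemma foldr_prod (T : Type) (g : T -> nat) s : foldr muln 1 (map g s) = \prod_(x <- s) g x.
Proof. by elim: s => [|x s IH]; rewrite ?big_nil ?big_cons //= IH. Qed.

Lemma card_prodset (F : 'I_n -> {set {set 'I_n}}) :
  #|[set f : outcome n | [forall v, f v \in F v]]| = \prod_v #|F v|.
Proof.
have -> : #|[set f : outcome n | [forall v, f v \in F v]]| = #|(family F : simpl_pred (outcome n))|.
  apply: eq_card => f; rewrite inE; apply/forallP/familyP => h v; exact: h.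
by rewrite card_family /image_mem foldr_prod enumT.
Qed.

Lemma card_adm : #|[set f : outcome n | admissible d f]| = \prod_v 'C(n, d v).
Proof.
have -> : #|[set f : outcome n | admissible d f]| = #|[set f : outcome n | [forall v, f v \in Dset (d v)]]|.
  by apply: eq_card => f; rewrite !inE; apply: eq_forallb => v; rewrite inE.
  rewrite card_prodset; apply: eq_bigr => v _.
  by rewrite /Dset card_draws card_ord.
Qed.

Lemma count_bound k :
  #|[set f : outcome n | admissible d f && (#|rev_reach f B| == k)]| <=
  \sum_(S : {set 'I_n} | (B \subset S) && (#|S| == k)) \prod_v #|Fam S v|.
Proof.
set E := [set f : outcome n | _].
rewrite -sum1_card (partition_big (fun f => rev_reach f B) (fun S => (B \subset S) && (#|S| == k))).
  apply: leq_sum => S _.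
  rewrite sum1dep_card -card_prodset; apply: subset_leq_card; apply/subsetP => f.
  rewrite !inE => /andP [/andP [hadm _] /eqP <-].
  by apply/forallP => v; apply: fam_mem.
by move=> f; rewrite inE => /andP [_ ->]; rewrite B_sub_rr.
Qed.

Lemma card_Fam k (S : {set 'I_n}) (v : 'I_n) : #|S| = k -> #|Fam S v| =
  if v \in B then 'C(n, d v) else if v \in S then 'C(n, d v) - 'C(n-k, d v) else 'C(n-k, d v).
Proof.
move=> hS.
have hD dd : #|Dset dd| = 'C(n, dd) by rewrite /Dset card_draws card_ord.
have hA dd : #|Aset S dd| = 'C(n - k, dd).
  rewrite /Aset cards_draws; congr 'C(_, _).
  have h := cardsC S; rewrite hS card_ord in h; by rewrite -{1}(addKn k #|~: S|) h.
rewrite /Fam; case: ifP => _; first exact: hD.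
case: ifP => _; last exact: hA.
rewrite cardsD hD; congr (_ - _).
rewrite (setIidPr _) ?hA //; apply/subsetP => X; rewrite !inE => /andP [_ ->] //.
Qed.
End Comb.

Import Order.TTheory GRing.Theory Num.Theory.
Local Open Scope ring_scope.

Definition RR := R.
Section Real.
Variable n : nat.
Variable d : 'I_n -> nat.
Variable B : {set 'I_n}.
Variable k : nat.
Hypothesis hd : forall v, (d v <= n)%N.

Definition beta v : R := (('C(n - k, d v))%:R / ('C(n, d v))%:R)%R.

Lemma Cpos v : ('C(n, d v))%:R != 0 :> R.
Proof. by rewrite pnatr_eq0 -lt0n bin_gt0 hd. Qed.

Lemma beta_ge0 v : 0 <= beta v.
Proof. by rewrite /beta divr_ge0 ?ler0n. Qed.

Lemma beta_le1 v : beta v <= 1.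
Proof.
rewrite /beta ler_pdivrMr ?mul1r ?ler_nat ?leq_bin2l ?leq_subr //.
by rewrite lt0r Cpos ler0n.
Qed.

Lemma ratio (S : {set 'I_n}) (v : 'I_n) : #|S| = k ->
  (#|Fam d B S v|%:R / ('C(n, d v))%:R)%R =
  if v \in B then 1 else if v \in S then 1 - beta v else beta v.
Proof.
move=> hS; rewrite (@card_Fam n d B k S v hS).
case: ifP => _; first by rewrite divff ?Cpos.
case: ifP => _ //.
rewrite natrB ?leq_bin2l ?leq_subr // mulrBl divff ?Cpos //.
Qed.


Definition hh (v : 'I_n) (b : bool) : R :=
  if v \in B then (if b then 1 else 0)%R else if b then ((1 - beta v) / 2)%R else beta v.

Lemma decomp (S : {set 'I_n}) : B \subset S -> #|S| = k ->
  (\prod_v (if v \in B then 1 else if v \in S then 1 - beta v else beta v))%R =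
  (2 ^+ (k - #|B|) * \prod_v hh v (v \in S))%R.
Proof.
move=> hBS hS.
rewrite (eq_bigr (fun v => (if v \in S :\: B then 2 else 1) * hh v (v \in S))%R); last first.
  move=> v _; rewrite /hh inE.
  case: (boolP (v \in B)) => hvB /=.
    by rewrite (subsetP hBS v hvB) mul1r.
  case: (v \in S) => /=; last by rewrite mul1r.
  by rewrite mulrCA divff ?mulr1 // pnatr_eq0.
rewrite big_split /= -big_mkcond prodr_const; congr (_ ^+ _ * _).
by rewrite cardsD hS (setIidPr hBS).
Qed.

Lemma hh_ge0 v b : (0 <= hh v b)%R.
Proof.
rewrite /hh; case: (v \in B); case: b => //=; rewrite ?ler01 ?lexx ?beta_ge0 //.
by rewrite divr_ge0 ?subr_ge0 ?beta_le1 ?ler0n.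
Qed.

Lemma real_bound :
  ((#|[set f : outcome n | admissible d f && (#|rev_reach f B| == k)]|)%:R /
   (#|[set f : outcome n | admissible d f]|)%:R <=
   2 ^+ (k - #|B|) * \prod_v (if v \in B then 1 else (1 + beta v) / 2))%R.
Proof.
rewrite card_adm.
have hC : (0 < (\prod_v 'C(n, d v))%:R :> R)%R.
  by rewrite natr_prod; apply: prodr_gt0 => v _; rewrite lt0r Cpos ler0n.
apply: (@le_trans _ _ ((\sum_(S : {set 'I_n} | (B \subset S) && (#|S| == k))
   \prod_v #|Fam d B S v|)%:R / (\prod_v 'C(n, d v))%:R)%R).
  apply: ler_wpM2r; [by rewrite invr_ge0 ltW | by rewrite ler_nat count_bound].
rewrite natr_sum mulr_suml.
have -> : (\sum_(S : {set 'I_n} | (B \subset S) && (#|S| == k))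
     ((\prod_v #|Fam d B S v|)%:R / (\prod_v 'C(n, d v))%:R))%R =
   (\sum_(S : {set 'I_n} | (B \subset S) && (#|S| == k)) (2 ^+ (k - #|B|) * \prod_v hh v (v \in S)))%R.
  apply: eq_bigr => S /andP [hBS /eqP hS].
  rewrite natr_prod natr_prod -prodf_div -decomp //.
  by apply: eq_bigr => v _; rewrite ratio.
rewrite -mulr_sumr ler_wpM2l ?exprn_ge0 ?ler0n //.
apply: (@le_trans _ _ (\sum_(S : {set 'I_n}) \prod_v hh v (v \in S))%R).
  rewrite [X in (_ <= X)%R](bigID (fun S : {set 'I_n} => (B \subset S) && (#|S| == k))) /=.
  rewrite lerDl; apply: sumr_ge0 => S _; apply: prodr_ge0 => v _; exact: hh_ge0.
have := @bigA_distr R 0%R 1%R *%R +%R _ (fun v => hh v true) (fun v => hh v false).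
move=> hD.
have -> : (\sum_(S : {set 'I_n}) \prod_v hh v (v \in S))%R =
  (\big[+%R/0%R]_(J in {set 'I_n}) \big[ *%R/1%R]_i (if i \in J then hh i true else hh i false))%R.
  apply: eq_big => [S|S _]; first by []. by apply: eq_bigr => v _; case: (v \in S).
rewrite -hD; apply: ler_prod => v _; rewrite addr_ge0 ?hh_ge0 //=.
rewrite /hh; case: (v \in B); first by rewrite addr0.
rewrite le_eqVlt; apply/orP; left; apply/eqP. by field.
Qed.

Lemma beta_bound v : (0 < n)%N -> (2 <= d v)%N -> (k <= n)%N ->
  (beta v <= (1 - k%:R / n%:R) ^+ 2)%R.
Proof.
move=> hn hd2 hk.
have hnR : (0 < n%:R :> R)%R by rewrite ltr0n.
have h1 : (1 - k%:R / n%:R = (n - k)%:R / n%:R :> R)%R.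
  by rewrite natrB // mulrBl divff ?gt_eqF.
have h01 : (0 <= (n - k)%:R / n%:R :> R)%R by rewrite divr_ge0 ?ler0n.
have h11 : ((n - k)%:R / n%:R <= 1 :> R)%R.
  by rewrite ler_pdivrMr // mul1r ler_nat leq_subr.
rewrite h1; apply: le_trans (ler_wiXn2l h01 h11 hd2).
rewrite expr_div_n /beta ler_pdivrMr; last by rewrite lt0r Cpos ler0n.
rewrite mulrAC ler_pdivlMr; last by rewrite exprn_gt0.
by rewrite -!natrX -!natrM ler_nat bin_ratio ?leq_subr.
Qed.

Lemma real_bound2 : (0 < n)%N -> (forall v, 2 <= d v)%N -> (k <= n)%N ->
  ((#|[set f : outcome n | admissible d f && (#|rev_reach f B| == k)]|)%:R /
   (#|[set f : outcome n | admissible d f]|)%:R <=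
   2 ^+ (k - #|B|) * (1 - (k%:R : RR) / n%:R + (k%:R / n%:R) ^+ 2 / 2) ^+ (n - #|B|))%R.
Proof.
move=> hn hd2 hk.
apply: le_trans real_bound _; rewrite ler_wpM2l ?exprn_ge0 ?ler0n //.
set a := (1 - _ + _)%R.
apply: (@le_trans _ _ (\prod_v (if v \notin B then a else 1))%R).
  apply: ler_prod => v _; case: (v \in B) => /=; rewrite ?lexx ?ler01 //.
  apply/andP; split; first by rewrite divr_ge0 ?ler0n // addr_ge0 ?ler01 ?beta_ge0.
  apply: (@le_trans _ _ ((1 + (1 - k%:R / n%:R) ^+ 2) / 2)%R).
    by rewrite ler_wpM2r ?invr_ge0 ?ler0n // lerD2l beta_bound.
  rewrite le_eqVlt; apply/orP; left; apply/eqP; rewrite /a. by field; rewrite pnatr_eq0 -lt0n.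
rewrite -big_mkcond prodr_const.
have -> : #|[pred v | v \notin B]| = (n - #|B|)%N.
  have h := cardC B; rewrite card_ord in h.
  have e : #|[pred v | v \notin B]| = #|[predC B]| by apply: eq_card.
  by rewrite e -{1}(addKn #|B| #|[predC B]|) h.
by [].
Qed.
End Real.

Local Close Scope ring_scope.
From Stdlib Require Import Reals.

Theorem lemma10 (dmax : nat) :
  exists c1 : R, (0 < c1)%R /\
  exists N : nat, forall n : nat, (N <= n)%N ->
  forall (d : 'I_n -> nat) (B : {set 'I_n}),
    (forall v, (2 <= d v <= dmax)%N) ->
    (INR #|B| <= c1 * INR n)%R ->
    forall k : nat,
      (30 * INR (ndistinct d) * ln (INR n) <= INR k <= c1 * INR n)%R ->
      (prob_rr_size d B k <= 1 / (INR n ^ 2))%R.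
Proof.
exists (1/100)%R; split; first lra.
exists dmax.+1 => n hN d B hd hB k [hk1 hk2].
have hn : (0 < n)%N by apply: leq_trans hN.
have hdn : forall v, (d v <= n)%N.
  by move=> v; have /andP [_ h] := hd v; apply: leq_trans h (ltnW hN).
have hd2 : forall v, (2 <= d v)%N by move=> v; have /andP [h _] := hd v.
have hnR : (1 <= INR n)%R.
  have h1 : le 1 n by apply/ssrnat.leP.
  exact: (le_INR 1 n h1).
have hx : (1 <= INR (ndistinct d))%R.
  suff h1 : le 1 (ndistinct d) by exact: (le_INR 1 _ h1).
  apply/ssrnat.leP.
  have hm : d (Ordinal hn) \in undup [seq d v | v <- enum 'I_n].
    by rewrite mem_undup; apply: map_f; rewrite mem_enum.
  rewrite /ndistinct; move: hm; by case: (undup _).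
have hln : (0 <= ln (INR n))%R.
  destruct (Rle_lt_or_eq_dec _ _ hnR) as [h|h].
  - rewrite -ln_1; left; apply ln_increasing; lra.
  - rewrite -h ln_1; lra.
have hk30 : (30 * ln (INR n) <= INR k)%R by nra.
have hkn : (k <= n)%N.
  apply/ssrnat.leP; apply: INR_le; lra.
have hBn : (#|B| <= n)%N by have := max_card (mem B); rewrite card_ord.
have P := @real_bound2 n d B k hdn hn hd2 hkn.
apply: Rle_trans (analytic hnR hk30 _ _ hBn); [ | lra | lra].
move/RleP: P.
rewrite -!INRE -!RpowE -!RdivE.
move=> P; rewrite /prob_rr_size; exact: P.
Qed.
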